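(* Let $X$ be a topological space, $\mathcal{D}$ the set of dense open subsets of $X$, and $\mathcal{D}'$ an admissible set of domains on $X$ with $\mathcal{D}'\subseteq\mathcal{D}$. Then the inclusion $\bigcup_{A\in\mathcal{D}'}\mathscr{C}(A)\to\bigcup_{A\in\mathcal{D}}\mathscr{C}(A)$, $f\mapsto f$, descends to a well-defined positive ring morphism $\check\iota\colon\mathscr{C}_\approx(\mathcal{D}')\to\mathscr{C}_\approx(\mathcal{D})=\mathscr{C}_{\mathrm{a.e.}}(X)$, and $\check\iota$ is an order embedding.
   Context: An admissible set of domains on $X$ is a set $\mathcal{E}$ of open subsets of $X$ with $X\in\mathcal{E}$ and $A\cap B\in\mathcal{E}$ for all $A,B\in\mathcal{E}$ (the dense open subsets form one). For such $\mathcal{E}$: on $\bigcup_{A\in\mathcal{E}}\mathscr{C}(A)$ ($\mathscr{C}(A)$ = continuous real functions on $A$) define $f+g$, $fg$ pointwise on $\operatorname{dom}f\cap\operatorname{dom}g$; $f\approx g$ iff $f|_A=g|_A$ for some $A\in\mathcal{E}$, $A\subseteq\operatorname{dom}f\cap\operatorname{dom}g$; $\mathscr{C}_\approx(\mathcal{E})$ is the quotient commutative ring, partially ordered by $[f]\le[g]$ iff $f|_A\le g|_A$ pointwise for some $A\in\mathcal{E}$, $A\subseteq\operatorname{dom}f\cap\operatorname{dom}g$. $\mathscr{C}_{\mathrm{a.e.}}(X)=\mathscr{C}_\approx(\mathcal{D})$ for $\mathcal{D}$ the dense open subsets. A ring morphism $\Phi\colon R\to S$ of partially ordered rings is positive if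 $\Phi(R^+)\subseteq S^+$, an order embedding if in addition $\Phi^{-1}(S^+)\subseteq R^+$. *)

(* Defs.v *)
From HB Require Import structures.
From mathcomp Require Import all_boot all_order all_algebra.
From mathcomp Require Import all_classical all_reals all_analysis.
Set Implicit Arguments. Unset Strict Implicit. Unset Printing Implicit Defensive.
Import Order.TTheory GRing.Theory Num.Theory numFieldNormedType.Exports.
Local Open Scope classical_set_scope.
Local Open Scope ring_scope.

(* A partial real function on X: a domain together with a value map.
   Values outside [dom_pdom] are irrelevant (all notions below only look at the
   function on subsets of its domain). *)
Record dom_pfun (X : Type) (R : Type) := dom_PFun { dom_pdom : set X ; dom_pval : X -> R }.

Section Defs.
Context {X : topologicalType} {R : realType}.

Definition dom_admissible (E : set (set X)) : Prop :=
  (forall A, E A -> open A) /\ E setT /\ (forall A B, E A -> E B -> E (A `&` B)).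

Definition dom_dense_open : set (set X) := [set A | open A /\ dense A].

Definition dom_inC (E : set (set X)) (f : dom_pfun X R) : Prop :=
  E (dom_pdom f) /\ {within dom_pdom f, continuous (dom_pval f : X -> R)}.

Definition dom_padd (f g : dom_pfun X R) : dom_pfun X R :=
  dom_PFun (dom_pdom f `&` dom_pdom g) (fun x => dom_pval f x + dom_pval g x).
Definition dom_pmul (f g : dom_pfun X R) : dom_pfun X R :=
  dom_PFun (dom_pdom f `&` dom_pdom g) (fun x => dom_pval f x * dom_pval g x).
Definition dom_pzero : dom_pfun X R := dom_PFun setT (fun _ => 0).
Definition dom_pone : dom_pfun X R := dom_PFun setT (fun _ => 1).

Definition dom_approx (E : set (set X)) (f g : dom_pfun X R) : Prop :=
  exists A, E A /\ A `<=` dom_pdom f `&` dom_pdom g /\ forall x, A x -> dom_pval f x = dom_pval g x.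

Definition dom_ple (E : set (set X)) (f g : dom_pfun X R) : Prop :=
  exists A, E A /\ A `<=` dom_pdom f `&` dom_pdom g /\ forall x, A x -> dom_pval f x <= dom_pval g x.

End Defs.

(* Main.v *)
Require Import Defs.
From mathcomp Require Import all_boot all_order all_algebra.
From mathcomp Require Import all_classical all_reals all_analysis.
Import Order.TTheory GRing.Theory Num.Theory numFieldNormedType.Exports.
Local Open Scope classical_set_scope.
Local Open Scope ring_scope.

Lemma key (X : topologicalType) (R : realType) (A B : set X) (f : X -> R) :
  open A -> dense B -> B `<=` A -> {within A, continuous f} ->
  (forall x, B x -> 0 <= f x) -> forall x, A x -> 0 <= f x.
Proof.
move=> oA dB BA cf pos x Ax.
rewrite leNgt; apply/negP => fx0.
have Aint : A° x by move: oA => /interior_id ->.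
have cx := cf x.
have H : nbhs x [set y | f y < 0].
  rewrite (nbhs_subspace_interior Aint); exact: (cvgr_lt _ cx _ fx0).
have HA : nbhs x A by apply: open_nbhs_nbhs; split.
have : nbhs x ([set y | f y < 0] `&` A) by apply: filterI.
rewrite nbhsE /=; case=> U [oU Ux] UP.
have [y [Uy By]] := dB U (ex_intro _ x Ux) oU.
have [fy _] := UP y Uy.
by move: (pos y By); rewrite leNgt fy.
Qed.

Theorem proposition17 (X : topologicalType) (R : realType) (D' : set (set X)) :
  dom_admissible D' -> D' `<=` dom_dense_open ->
  [/\ (forall f : dom_pfun X R, dom_inC D' f -> dom_inC dom_dense_open f),
      (forall f g : dom_pfun X R, dom_inC D' f -> dom_inC D' g ->
          dom_approx D' f g -> dom_approx dom_dense_open f g),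
      [/\ (forall f g : dom_pfun X R, dom_inC D' f -> dom_inC D' g ->
             dom_approx dom_dense_open (dom_padd f g) (dom_padd f g)),
          (forall f g : dom_pfun X R, dom_inC D' f -> dom_inC D' g ->
             dom_approx dom_dense_open (dom_pmul f g) (dom_pmul f g)) &
          dom_approx dom_dense_open (@dom_pone X R) (@dom_pone X R)],
      (forall f : dom_pfun X R, dom_inC D' f -> dom_ple D' dom_pzero f -> dom_ple dom_dense_open dom_pzero f) &
      (forall f : dom_pfun X R, dom_inC D' f -> dom_ple dom_dense_open dom_pzero f -> dom_ple D' dom_pzero f)].
Proof.
move=> [Dopen [DT DI]] DD; split.
- by move=> f [Df cf]; split => //; apply: DD.
- by move=> f g _ _ [A [DA [sA eA]]]; exists A; split => //; apply: DD.
- split.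
  + move=> f g [Df _] [Dg _]; exists (dom_pdom f `&` dom_pdom g); split.
      by apply: DD; apply: DI.
    by split => // x [].
  + move=> f g [Df _] [Dg _]; exists (dom_pdom f `&` dom_pdom g); split.
      by apply: DD; apply: DI.
    by split => // x [].
  + exists setT; split; first by apply: DD.
    by split => // x.
- by move=> f _ [A [DA [sA eA]]]; exists A; split => //; apply: DD.
- move=> f [Df cf] [B [[oB dB] [sB eB]]]; exists (dom_pdom f); split => //.
  split; first by move=> x fx; split.
  move=> x fx /=. apply: (@key X R (dom_pdom f) B (dom_pval f) (Dopen _ Df) dB _ cf _ x fx).
    by move=> y /sB [].
  exact: eB.
Qed.
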